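(* There is no $\mathcal{R}$-commutative T2R semigroup.
   Context: A semigroup $S$ is $\mathcal{R}$-commutative if for every $s,t\in S$ there is an element $r\in S^1$ (where $S^1$ is $S$ with an identity adjoined) such that $st=tsr$. A semigroup $S$ is a $\Delta$-semigroup if the lattice of all congruences of $S$ is a chain with respect to inclusion. A semigroup $N$ with zero $0$ is nil if every element has some power equal to $0$; non-trivial means having more than one element. A T2R semigroup is a $\Delta$-semigroup $S$ which is the disjoint union of a non-trivial nil ideal $S_0$ (with zero $0$, which is then the zero of $S$) and a subsemigroup $S_1=\{u,v\}$, $u\neq v$, which is a right zero semigroup ($xy=y$ for $x,y\in S_1$). *)

(* Defs.v *)
Definition associative {S : Type} (mul : S -> S -> S) : Prop :=
  forall x y z, mul x (mul y z) = mul (mul x y) z.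

(* Multiplication by an element of S^1 = S with identity adjoined,
   the adjoined identity being [None]. *)
Definition mul1 {S : Type} (mul : S -> S -> S) (x : S) (r : option S) : S :=
  match r with None => x | Some r' => mul x r' end.

Definition R_commutative {S : Type} (mul : S -> S -> S) : Prop :=
  forall s t : S, exists r : option S, mul s t = mul1 mul (mul t s) r.

Definition congruence {S : Type} (mul : S -> S -> S) (c : S -> S -> Prop) : Prop :=
  (forall x, c x x) /\
  (forall x y, c x y -> c y x) /\
  (forall x y z, c x y -> c y z -> c x z) /\
  (forall x y z, c x y -> c (mul z x) (mul z y)) /\
  (forall x y z, c x y -> c (mul x z) (mul y z)).

Definition Delta_semigroup {S : Type} (mul : S -> S -> S) : Prop :=
  forall c1 c2 : S -> S -> Prop,
    congruence mul c1 -> congruence mul c2 ->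
    (forall x y, c1 x y -> c2 x y) \/ (forall x y, c2 x y -> c1 x y).

(* Positive powers: spow mul x n = x^(n+1). *)
Fixpoint spow {S : Type} (mul : S -> S -> S) (x : S) (n : nat) : S :=
  match n with O => x | S n' => mul (spow mul x n') x end.

Definition T2R {S : Type} (mul : S -> S -> S) : Prop :=
  Delta_semigroup mul /\
  exists (S0 : S -> Prop) (z u v : S),
    (forall x y, S0 x -> S0 (mul x y) /\ S0 (mul y x)) /\
    S0 z /\ (forall x, S0 x -> mul z x = z /\ mul x z = z) /\
    (forall x, S0 x -> exists n, spow mul x n = z) /\
    (exists x, S0 x /\ x <> z) /\
    u <> v /\ ~ S0 u /\ ~ S0 v /\
    (forall x, S0 x \/ x = u \/ x = v) /\
    mul u u = u /\ mul u v = v /\ mul v u = u /\ mul v v = v.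

(* Main.v *)
Require Import Defs.
From Stdlib Require Import Classical.

Theorem mainTheorem9 (S : Type) (mul : S -> S -> S) :
  associative mul -> R_commutative mul -> ~ T2R mul.
Proof.
  intros assoc Rc [Delta [S0 [z [u [v H]]]]].
  destruct H as (Hid & Hz & Hzero & Hnil & [a [Ha Haz]] & Huv & Hu & Hv & Hcov
                 & Huu & Huv' & Hvu & Hvv).
  assert (Ir : forall x y, S0 x -> S0 (mul x y)) by (intros x y Hx; exact (proj1 (Hid x y Hx))).
  assert (Il : forall x y, S0 x -> S0 (mul y x)) by (intros x y Hx; exact (proj2 (Hid x y Hx))).
  assert (Z : forall r, mul z r = z).
  { intro r. destruct (Hid z r Hz) as [H1 _]. destruct (Hzero _ H1) as [E _].
    transitivity (mul (mul z z) r).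
    - rewrite (proj1 (Hzero z Hz)); reflexivity.
    - rewrite <- assoc. exact E. }
  assert (Ncan : forall p e, S0 p -> S0 e -> p = mul p e -> p = z).
  { intros p e Hp He Hpe. destruct (Hnil e He) as [n Hn].
    assert (Hm : forall m, p = mul p (spow mul e m)).
    { induction m; simpl. exact Hpe. rewrite assoc, <- IHm. exact Hpe. }
    rewrite (Hm n), Hn. exact (proj2 (Hzero p Hp)). }
  assert (W : forall w x, (w = u \/ w = v) -> S0 x -> mul (mul w x) u = mul x u).
  { intros w x Hw Hx.
    assert (Hwu : mul w u = u) by (destruct Hw; subst; auto).
    assert (HxwS : S0 (mul x w)) by (apply Ir; auto).
    destruct (Rc w x) as [r1 E1]. destruct (Rc x w) as [r2 E2].
    destruct r1 as [y|]; simpl in E1.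
    - destruct (Hcov y) as [Hy | [Hy|Hy]].
      + assert (Hq : mul x w = z).
        { destruct r2 as [y2|]; simpl in E2.
          - apply (Ncan _ (mul y y2) HxwS (Ir _ _ Hy)).
            rewrite assoc, <- E1, <- E2. reflexivity.
          - apply (Ncan _ y); auto. rewrite <- E1. exact E2. }
        rewrite E1, Hq, Z, Z. rewrite <- Hwu. rewrite assoc, Hq, Z. reflexivity.
      + subst y. rewrite E1. rewrite <- (assoc (mul x w) u u), Huu.
        rewrite <- assoc, Hwu. reflexivity.
      + subst y. rewrite E1. rewrite <- (assoc (mul x w) v u), Hvu.
        rewrite <- assoc, Hwu. reflexivity.
    - rewrite E1, <- assoc, Hwu. reflexivity. }
  set (T := fun x => exists y r, S0 y /\ x = mul1 mul (mul y u) r).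
  assert (T0 : T z). { exists z, None. split; auto. simpl. rewrite Z; reflexivity. }
  assert (TS0 : forall x, T x -> S0 x).
  { intros x [y [r [Hy ->]]]. destruct r; simpl; auto. }
  assert (Tr : forall x w, T x -> T (mul x w)).
  { intros x w [y [r [Hy ->]]]. destruct r as [r|]; simpl.
    - exists y, (Some (mul r w)). split; auto. simpl. rewrite assoc; reflexivity.
    - exists y, (Some w). split; auto. }
  assert (Tl : forall x w, T x -> T (mul w x)).
  { intros x w [y [r [Hy ->]]]. exists (mul w y), r. split.
    - apply Il; auto.
    - destruct r; simpl; rewrite !assoc; reflexivity. }
  assert (Tr1 : forall x r, T x -> T (mul1 mul x r)).
  { intros x [r|] Hx; simpl; auto. }
  assert (TU : forall w, S0 w -> T (mul w u)).
  { intros w Hw. exists w, None. split; auto. }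
  assert (TV : forall w, S0 w -> T (mul w v)).
  { intros w Hw. exists w, (Some v). split; auto. simpl. rewrite <- assoc, Huv'. reflexivity. }
  set (c1 := fun x y => x = y \/ (S0 x /\ S0 y)).
  assert (Cc1 : congruence mul c1).
  { unfold c1. split; [|split; [|split; [|split]]].
    - intros; left; reflexivity.
    - intros x y [H|[H1 H2]]; [left; auto | right; auto].
    - intros x y w [H|[H1 H2]] [H'|[H3 H4]]; subst; auto.
    - intros x y w [H|[H1 H2]]; [left; subst; auto | right; split; apply Il; auto].
    - intros x y w [H|[H1 H2]]; [left; subst; auto | right; split; apply Ir; auto]. }
  destruct (classic (exists b, S0 b /\ ~ T b)) as [HA | HB].
  - set (rho := fun x y => x = y \/ ((x = u \/ x = v) /\ (y = u \/ y = v)) \/ (T x /\ T y)).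
    assert (Tnuv : forall x, T x -> (x = u \/ x = v) -> False).
    { intros x Hx [->| ->]; apply TS0 in Hx; auto. }
    assert (Crho : congruence mul rho).
    { unfold rho. split; [|split; [|split; [|split]]].
      - intros; left; reflexivity.
      - intros x y [H|[[H1 H2]|[H1 H2]]]; auto.
      - intros x y w H1 H2. destruct H1 as [<-|[[A B]|[A B]]]; auto.
        + destruct H2 as [<-|[[C D]|[C D]]]; auto.
          exfalso; exact (Tnuv y C B).
        + destruct H2 as [<-|[[C D]|[C D]]]; auto.
          exfalso; exact (Tnuv y B C).
      - intros x y w [H|[[H1 H2]|[H1 H2]]].
        + left; subst; auto.
        + destruct (Hcov w) as [Hw|[-> | ->]].
          * right; right. split; [destruct H1 as [->| ->] | destruct H2 as [->| ->]]; auto.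
          * right; left. split; [destruct H1 as [->| ->] | destruct H2 as [->| ->]];
              rewrite ?Huu, ?Huv'; auto.
          * right; left. split; [destruct H1 as [->| ->] | destruct H2 as [->| ->]];
              rewrite ?Hvu, ?Hvv; auto.
        + right; right; split; apply Tl; auto.
      - intros x y w [H|[[H1 H2]|[H1 H2]]].
        + left; subst; auto.
        + destruct (Hcov w) as [Hw|[-> | ->]].
          * right; right.
            assert (K : forall x, (x = u \/ x = v) -> T (mul x w)).
            { intros x0 Hx0. destruct (Rc x0 w) as [r E]. rewrite E. apply Tr1.
              destruct Hx0 as [-> | ->]; auto. }
            auto.
          * left. destruct H1 as [->| ->]; destruct H2 as [->| ->]; congruence.
          * left. destruct H1 as [->| ->]; destruct H2 as [->| ->]; congruence.
        + right; right; split; apply Tr; auto. }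
    destruct (Delta c1 rho Cc1 Crho) as [Inc|Inc].
    + destruct HA as [b [Hb Hnb]].
      assert (Hr : rho b z) by (apply Inc; right; auto).
      destruct Hr as [Hr|[[[Hr|Hr] _]|[Hr _]]].
      * subst; auto.
      * subst; auto.
      * subst; auto.
      * auto.
    + assert (Hc : c1 u v) by (apply Inc; right; left; auto).
      destruct Hc as [Hc|[Hc _]]; auto.
  - assert (HT : forall b, S0 b -> T b).
    { intros b Hb. apply NNPP. intro Hn. apply HB. eauto. }
    set (theta := fun x y => forall w, mul x w = mul y w).
    assert (Cth : congruence mul theta).
    { unfold theta. split; [|split; [|split; [|split]]].
      - reflexivity.
      - intros x y H w; auto.
      - intros x y w' H1 H2 w. rewrite H1; auto.
      - intros x y w' H w. rewrite <- !assoc, H; reflexivity.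
      - intros x y w' H w. rewrite <- !assoc, H; reflexivity. }
    destruct (Delta c1 theta Cc1 Cth) as [Inc|Inc].
    + assert (Ht : forall x, S0 x -> theta x z) by (intros; apply Inc; right; auto).
      destruct (HT a Ha) as [y [r [Hy Ea]]].
      assert (Hyu : mul y u = z) by (rewrite (Ht y Hy u); apply Z).
      rewrite Hyu in Ea. destruct r; simpl in Ea; rewrite ?Z in Ea; auto.
    + assert (Htuv : theta u v).
      { intro w. destruct (Hcov w) as [Hw|[-> | ->]].
        - destruct (HT w Hw) as [y [r [Hy ->]]].
          destruct r; simpl; rewrite !assoc, (W u y), (W v y); auto.
        - rewrite Huu, Hvu; reflexivity.
        - rewrite Huv', Hvv; reflexivity. }
      destruct (Inc _ _ Htuv) as [Hc|[Hc _]]; auto.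
Qed.
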